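(* Let $t\in[n]$. If $S\subseteq N$ is $t$-switchable, then $P^{\langle t\rangle}_S$ contains $\mathcal{I}^{\langle t\rangle}$.
   Context: Fix positive integers $n, r_1,\dots,r_n$, let $N=[r_1]\times\cdots\times[r_n]$, and let $R$ be the polynomial ring over a field in the variables $x_a$, $a\in N$. For $a,b\in N$ and $i\in[n]$, ${\rm s}(i,a,b)\in N$ has $i$-th component $b_i$ and other components equal to those of $a$. Let $d(a,b)=\#\{j: a_j\neq b_j\}$ and $f_{i,a,b}=x_ax_b-x_{{\rm s}(i,a,b)}x_{{\rm s}(i,b,a)}$. Let $\mathcal{I}^{\langle t\rangle}=(f_{i,a,b}: a,b\in N,\ d(a,b)=2,\ i\in[t])$. A subset $S\subseteq N$ is $t$-switchable if for all $a,b\in S$ with $d(a,b)=2$ and all $i\in[t]$, ${\rm s}(i,a,b)\in S$. Elements $a,b\in S$ are connected in $S$ if there are $a_0=a,\dots,a_k=b$ in $S$ with $d(a_{j-1},a_j)\le 1$ for all $j$. For $t$-switchable $S$: $\tilde{\mathcal{I}}^{\langle t\rangle}_S=(f_{i,a,b}: i\in[t],\ a,b \text{ connected in } S)$, $\mathrm{Var}^{\langle t\rangle}_S=(x_a: a\notin S)$, $P^{\langle t\rangle}_S=\mathrm{Var}^{\langle t\rangle}_S+\tilde{\mathcal{I}}^{\langle t\rangle}_S$. *)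

(* Defs.v *)
From HB Require Import structures.
From mathcomp Require Import all_boot all_order all_algebra.
From mathcomp Require Import mpoly.
Set Implicit Arguments. Unset Strict Implicit. Unset Printing Implicit Defensive.
Import GRing.Theory.
Local Open Scope ring_scope.

(* The index set N = [r_1] x ... x [r_n], components 0-based. *)
Definition idxN (n : nat) (r : 'I_n -> nat) : finType :=
  {dffun forall i : 'I_n, 'I_(r i)}.

Section Defs.
Variables (n : nat) (r : 'I_n -> nat) (K : fieldType).
Local Notation N := (idxN r).

Definition polyR := {mpoly K[#|N|]}.
Definition xv (a : N) : polyR := 'X_(enum_rank a).

Definition sw (i : 'I_n) (a b : N) : N :=
  [ffun j => if j == i then b j else a j].

Definition dist (a b : N) : nat := #|[set j | a j != b j]|.

Definition fgen (i : 'I_n) (a b : N) : polyR :=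
  xv a * xv b - xv (sw i a b) * xv (sw i b a).

Definition ideal_gen (G : polyR -> Prop) (p : polyR) : Prop :=
  exists s : seq (polyR * polyR),
    (forall q, q \in s -> G q.2) /\ p = \sum_(q <- s) q.1 * q.2.

Definition ideal_add (I J : polyR -> Prop) (p : polyR) : Prop :=
  exists p1 p2, I p1 /\ J p2 /\ p = p1 + p2.

(* i \in [t] corresponds to (i : 'I_n) < t with 0-based indices *)
Definition I_t (t : nat) : polyR -> Prop :=
  ideal_gen (fun f => exists (a b : N) (i : 'I_n),
     dist a b = 2 /\ (i < t)%N /\ f = fgen i a b).

Definition switchable (t : nat) (S : {set N}) : Prop :=
  forall (a b : N) (i : 'I_n), a \in S -> b \in S -> dist a b = 2 ->
    (i < t)%N -> sw i a b \in S.

Definition connected_in (S : {set N}) (a b : N) : Prop :=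
  exists p : seq N, all (fun c => c \in S) (a :: p) /\
    path (fun u v => (dist u v <= 1)%N) a p /\ last a p = b.

Definition Itilde (t : nat) (S : {set N}) : polyR -> Prop :=
  ideal_gen (fun f => exists (a b : N) (i : 'I_n),
     (i < t)%N /\ connected_in S a b /\ f = fgen i a b).

Definition VarS (S : {set N}) : polyR -> Prop :=
  ideal_gen (fun f => exists a : N, a \notin S /\ f = xv a).

Definition P_S (t : nat) (S : {set N}) : polyR -> Prop :=
  ideal_add (VarS S) (Itilde t S).
End Defs.

(* Main.v *)
Require Import Defs.
From mathcomp Require Import all_boot all_order all_algebra.
From mathcomp Require Import mpoly.
Set Implicit Arguments. Unset Strict Implicit. Unset Printing Implicit Defensive.
Import GRing.Theory.
Local Open Scope ring_scope.

Section H.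
Variables (n : nat) (r : 'I_n -> nat) (K : fieldType).
Local Notation N := (idxN r).
Local Notation R := (polyR r K).

Lemma ig_gen (G : R -> Prop) g : G g -> ideal_gen G g.
Proof.
move=> Gg; exists [:: (1, g)]; split; first by move=> q; rewrite inE => /eqP ->.
by rewrite big_seq1 mul1r.
Qed.

Lemma ig0 (G : R -> Prop) : ideal_gen G 0.
Proof. by exists [::]; split => // ; rewrite big_nil. Qed.

Lemma igD (G : R -> Prop) p q : ideal_gen G p -> ideal_gen G q -> ideal_gen G (p + q).
Proof.
move=> [s1 [H1 ->]] [s2 [H2 ->]]; exists (s1 ++ s2); split; last by rewrite big_cat.
by move=> x; rewrite mem_cat => /orP [/H1|/H2].
Qed.

Lemma igM (G : R -> Prop) c p : ideal_gen G p -> ideal_gen G (c * p).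
Proof.
move=> [s [Hs ->]]; exists [seq (c * x.1, x.2) | x <- s]; split.
  by move=> x /mapP [y ys ->] /=; apply: Hs.
by rewrite big_map mulr_sumr; apply: eq_bigr => x _; rewrite mulrA.
Qed.

Lemma iaD (I J : R -> Prop) p q : ideal_add I J p -> ideal_add I J q ->
  (forall x y, I x -> I y -> I (x + y)) -> (forall x y, J x -> J y -> J (x + y)) ->
  ideal_add I J (p + q).
Proof.
move=> [p1 [p2 [Ip1 [Jp2 ->]]]] [q1 [q2 [Iq1 [Jq2 ->]]]] HI HJ.
exists (p1 + q1), (p2 + q2); split; first exact: HI.
split; first exact: HJ.
by rewrite addrACA.
Qed.

Lemma swK (i : 'I_n) (a b : N) : sw i (sw i a b) (sw i b a) = a.
Proof. by apply/ffunP => j; rewrite !ffunE; case: eqP => [->|]; rewrite ?ffunE ?eqxx // => /eqP /negbTE ->. Qed.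

Lemma dist_sw (i : 'I_n) (a b : N) : dist (sw i a b) (sw i b a) = dist a b.
Proof.
rewrite /dist; apply: eq_card => j; rewrite !inE !ffunE; rewrite /=.
by case: (j == i) => //; rewrite eq_sym.
Qed.

Lemma sw_same (i : 'I_n) (a b : N) : a i = b i -> sw i a b = a.
Proof. by move=> e; apply/ffunP => j; rewrite ffunE; case: eqP => // ->. Qed.

Lemma dist_a_sw (i : 'I_n) (a b : N) : (dist a (sw i a b) <= 1)%N.
Proof.
rewrite /dist -(cards1 i); apply: subset_leq_card; apply/subsetP => j.
have [->|ne] := eqVneq j i; first by rewrite !inE.
by rewrite !inE ffunE (negbTE ne) eqxx.
Qed.

Lemma dist_sw_b (i : 'I_n) (a b : N) : a i != b i -> dist a b = 2 ->
  (dist (sw i a b) b <= 1)%N.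
Proof.
move=> ne d2; have : #|[set j | a j != b j] :\ i| = 1%N.
  by move: d2; rewrite /dist (cardsD1 i) inE ne add1n => -[].
move=> <-; rewrite /dist; apply: subset_leq_card; apply/subsetP => j.
have [->|nj] := eqVneq j i; first by rewrite !inE ffunE !eqxx.
by rewrite !inE ffunE (negbTE nj).
Qed.
Lemma igN (G : R -> Prop) p : ideal_gen G p -> ideal_gen G (- p).
Proof. by move=> h; rewrite -mulN1r; apply: igM. Qed.

Lemma var_prod (S : {set N}) (u v : N) : u \notin S \/ v \notin S ->
  VarS S (xv K u * xv K v).
Proof.
case=> h; last by apply: igM; apply: ig_gen; exists v.
by rewrite mulrC; apply: igM; apply: ig_gen; exists u.
Qed.
End H.

Theorem proposition4p2 (K : fieldType) (n : nat) (r : 'I_n -> nat)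
  (hr : forall i, (0 < r i)%N) (t : nat) (ht1 : (1 <= t)%N) (htn : (t <= n)%N)
  (S : {set idxN r}) :
  switchable t S ->
  forall p : polyR r K, I_t t p -> P_S t S p.
Proof.
move=> sS p [s [Hs ->]].
have P0 : P_S t S (0 : polyR r K).
  by exists 0, 0; split; [exact: ig0|split; [exact: ig0| rewrite addr0]].
elim: s Hs => [|[c g] s IH] Hs; first by rewrite big_nil.
rewrite big_cons; apply: iaD; last first.
- by move=> x y; apply: igD.
- by move=> x y; apply: igD.
- by apply: IH => q qs; apply: Hs; rewrite inE qs orbT.
have [a [b [i [d2 [it ->]]]]] : _ := Hs (c, g) (mem_head _ _).
rewrite /=.
have [eab|neab] := eqVneq (a i) (b i).
  have -> : fgen K i a b = 0.
    by rewrite /fgen (sw_same eab) (sw_same (esym eab)) subrr.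
  by rewrite mulr0.
have sw_notS : a \notin S \/ b \notin S -> sw i a b \notin S \/ sw i b a \notin S.
  move=> H; case h1: (sw i a b \in S); last by left.
  case h2: (sw i b a \in S); last by right.
  exfalso; case: H => /negP; apply.
  - by rewrite -(swK i a b); apply: sS => //; rewrite dist_sw.
  - rewrite -(swK i b a); apply: sS => //; rewrite dist_sw //.
    by rewrite /dist; rewrite -d2 /dist; apply: eq_card => j; rewrite !inE eq_sym.
case aS: (a \in S); case bS: (b \in S).
- exists 0, (c * fgen K i a b); split; first exact: ig0.
  split; last by rewrite add0r.
  apply: igM; apply: ig_gen; exists a, b, i; split => //; split => //.
  exists [:: sw i a b; b]; split.
    by rewrite /= aS bS andbT /= andbT; apply: sS.
  by rewrite /= dist_a_sw dist_sw_b.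
all: have [h1|h1] : sw i a b \notin S \/ sw i b a \notin S
  by apply: sw_notS; rewrite ?aS ?bS; auto.
all: exists (c * fgen K i a b), 0; split; last (split; [exact: ig0| by rewrite addr0]).
all: apply: igM; rewrite /fgen; apply: igD; [apply: var_prod | apply: igN; apply: var_prod].
all: by rewrite ?aS ?bS ?h1; auto.
Qed.
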